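(* Let $\tau=e^{2\pi i/3}$, $q_1(t)=-t-1$, $q_\tau(t)=-t-\tau$, $q_{\tau^2}(t)=-t-\tau^2$, and let $t(i,j)$ be defined on the vertices $a_{i,j}$ of the following labelled graph: vertices (row $1$: $a_{1,1}$; rows $2,3$: $a_{i,1},a_{i,2}$; for $i\ge4$, $1\le j\le\frac i2+1$ if $i$ even, $1\le j\le\frac{i-1}{2}+1$ if $i$ odd); edges $a_{1,1}\to a_{2,1}$ labelled $q_\tau$, $a_{1,1}\to a_{2,2}$ labelled $q_{\tau^2}$, and for $k\ge1$, $1\le j\le k+1$: $a_{2k,j}\to a_{2k+1,j}$ labelled $q_1$, $a_{2k+1,j}\to a_{2k+2,j}$ labelled $q_\tau$, $a_{2k+1,j}\to a_{2k+2,j+1}$ labelled $q_{\tau^2}$; $t(1,1)=-2$ and $t(i,j)$ is obtained from $-2$ by applying the maps labelling the edges along a directed path from $a_{1,1}$ to $a_{i,j}$. Then \[\frac{t(i,j)-1}{-2-\tau}=c(i,j)+d(i,j)\,\tau\in\mathbb{Z}[\tau],\] where $c(1,1)=1$, $d(1,1)=-1$, and for $i\ge2$: - if $i$ is even: for $j=1$, $c(i,1)=0$, $d(i,1)=\frac i2$; for $2\le j\le \frac i2+1$, $c(i,j)=-(j-1)$, $d(i,j)=\frac i2+1-j$; - if $i$ is odd: for $j=1$, $c(i,1)=1$, $d(i,1)=-\frac{i-1}{2}-1$; for $2\le j\le\frac{i-1}{2}+1$, $c(i,j)=1+(j-1)$, $d(i,j)=-\frac{i-1}{2}-1+(j-1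)$.
   Context: Here $\tau$ is a primitive cube root of unity, so $1+\tau+\tau^2=0$. In the paper, $t(i,j)$ is the parameter of the elliptic pencil at entry $a_{i,j}$ of a diagram of bifurcations of Cremona maps, the recursion above describing how the parameter changes. *)

(* Defs.v *)
From mathcomp Require Import all_boot all_order all_algebra all_field.
Set Implicit Arguments. Unset Strict Implicit. Unset Printing Implicit Defensive.
Import Order.TTheory GRing.Theory Num.Theory.
Local Open Scope ring_scope.

Inductive label := L1 | Ltau | Ltau2.

Definition qmap (tau : algC) (l : label) (t : algC) : algC :=
  match l with
  | L1 => - t - 1
  | Ltau => - t - tau
  | Ltau2 => - t - tau ^+ 2
  end.

(* Vertices a_{i,j} of the diagram (1-indexed). For i >= 2,
   j ranges over 1 <= j <= i/2 + 1 (i even) or (i-1)/2 + 1 (i odd), i.e. i./2 + 1. *)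
Definition vertex (i j : nat) : Prop :=
  (i = 1 /\ j = 1)%N \/ (2 <= i /\ 1 <= j <= i./2 + 1)%N.

Definition edge (v w : nat * nat) (l : label) : Prop :=
  (v = (1, 1)%N /\ w = (2, 1)%N /\ l = Ltau)
  \/ (v = (1, 1)%N /\ w = (2, 2)%N /\ l = Ltau2)
  \/ (exists k j : nat, (1 <= k)%N /\ (1 <= j <= k + 1)%N /\
        ((v = (k.*2, j) /\ w = (k.*2 + 1, j) /\ l = L1)
         \/ (v = (k.*2 + 1, j) /\ w = (k.*2 + 2, j) /\ l = Ltau)
         \/ (v = (k.*2 + 1, j) /\ w = (k.*2 + 2, j + 1) /\ l = Ltau2)))%N.

Fixpoint is_path (v : nat * nat) (p : seq ((nat * nat) * label)) : Prop :=
  match p with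
  | [::] => True
  | (w, l) :: p' => edge v w l /\ is_path w p'
  end.

Definition path_end (v : nat * nat) (p : seq ((nat * nat) * label)) : nat * nat :=
  last v (map fst p).

Definition path_value (tau : algC) (p : seq ((nat * nat) * label)) (t0 : algC) : algC :=
  foldl (fun t s => qmap tau s.2 t) t0 p.

Definition cc (i j : nat) : int :=
  if i == 1%N then 1%Z
  else if ~~ odd i then
    (if j == 1%N then 0%Z else - (j.-1)%:Z)
  else
    (if j == 1%N then 1%Z else 1%Z + (j.-1)%:Z).

Definition dd (i j : nat) : int :=
  if i == 1%N then (-1)%Z
  else if ~~ odd i then
    (if j == 1%N then (i./2)%:Z else (i./2)%:Z + 1 - j%:Z)
  else
    (if j == 1%N then - (i./2)%:Z - 1 else - (i./2)%:Z - 1 + (j.-1)%:Z).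

(* Main.v *)
Require Import Defs.
From mathcomp Require Import all_boot all_order all_algebra all_field.
From mathcomp Require Import ring zify.
Import Order.TTheory GRing.Theory Num.Theory.
Local Open Scope ring_scope.

Section S.
Variable tau : algC.
Hypothesis htau : tau ^+ 2 + tau + 1 = 0.

Lemma Dn0 : (-2 - tau) != 0.
Proof.
apply/eqP => H.
have Ht : tau = -2 by rewrite -[tau]opprK -(subr0 (- tau)) -H; ring.
move: htau; rewrite Ht => /eqP; rewrite -subr_eq0.
have -> : (-2) ^+ 2 + (-2) + 1 - 0 = 3%:R :> algC by ring.
by rewrite pnatr_eq0.
Qed.

Lemma stepL1 t u : (t - 1) / (-2 - tau) = u ->
  (qmap tau L1 t - 1) / (-2 - tau) = (1 - tau) - u.
Proof.
move=> H; have Ht : t = u * (-2 - tau) + 1.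
  by rewrite -H divfK ?Dn0 //; ring.
apply: (mulIf Dn0); rewrite divfK ?Dn0 // /= Ht.
transitivity (((1-tau)-u)*(-2 - tau) - (tau^+2+tau+1)); first ring.
by rewrite htau subr0.
Qed.

Lemma stepLt t u : (t - 1) / (-2 - tau) = u ->
  (qmap tau Ltau t - 1) / (-2 - tau) = 1 - u.
Proof.
move=> H; have Ht : t = u * (-2 - tau) + 1.
  by rewrite -H divfK ?Dn0 //; ring.
apply: (mulIf Dn0); rewrite divfK ?Dn0 // /= Ht.
ring.
Qed.

Lemma stepLt2 t u : (t - 1) / (-2 - tau) = u ->
  (qmap tau Ltau2 t - 1) / (-2 - tau) = - tau - u.
Proof.
move=> H; have Ht : t = u * (-2 - tau) + 1.
  by rewrite -H divfK ?Dn0 //; ring.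
apply: (mulIf Dn0); rewrite divfK ?Dn0 // /= Ht.
transitivity ((-tau-u)*(-2 - tau) - 2%:R * (tau^+2+tau+1)); first ring.
by rewrite htau mulr0 subr0.
Qed.

Definition P (v : nat * nat) (t : algC) :=
  (t - 1) / (-2 - tau) = (cc v.1 v.2)%:~R + (dd v.1 v.2)%:~R * tau.

Lemma half2 k : (k.*2 + 1)./2 = k /\ (k.*2 + 2)./2 = k.+1 /\ (k.*2)./2 = k.
Proof.
split; first by rewrite addn1 /= uphalf_double.
split; last by rewrite doubleK.
by rewrite addn2 -doubleS doubleK.
Qed.

Lemma edgeP v w l t : edge v w l -> P v t -> P w (qmap tau l t).
Proof.
rewrite /P.
case=> [[-> [-> ->]]|[[-> [-> ->]]|[k [j [hk [hj H]]]]]] /=.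
- move/stepLt => ->; rewrite /cc /dd /=.
  ring.
- move/stepLt2 => ->; rewrite /cc /dd /=.
  ring.
have [h1 [h2 h3]] := half2 k.
have o1 : odd (k.*2 + 1) by rewrite addn1 /= odd_double.
have o2 : odd (k.*2 + 2) = false by rewrite addn2 -doubleS odd_double.
have o3 := odd_double k.
have n1 : (k.*2 + 1 == 1)%N = false by apply/eqP; lia.
have n2 : (k.*2 + 2 == 1)%N = false by apply/eqP; lia.
have n3 : (k.*2 == 1)%N = false by apply/eqP; lia.
case: H => [[-> [-> ->]]|[[-> [-> ->]]|[-> [-> ->]]]] /=.
- move/stepL1 => ->.
  have Ec : cc (k.*2 + 1) j = 1 - cc k.*2 j.
    rewrite /cc n1 n3 o1 o3 /=; case: j hj => [|[|j]] //= hj; lia.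
  have Ed : dd (k.*2 + 1) j = -1 - dd k.*2 j.
    clear Ec; rewrite /dd n1 n3 o1 o3 h1 h3 /=; case: j hj => [|[|j]] //= hj; lia.
  rewrite Ec Ed; ring.
- move/stepLt => ->.
  have Ec : cc (k.*2 + 2) j = 1 - cc (k.*2 + 1) j.
    rewrite /cc n1 n2 o1 o2 /=; case: j hj => [|[|j]] //= hj; lia.
  have Ed : dd (k.*2 + 2) j = - dd (k.*2+1) j.
    clear Ec; rewrite /dd n1 n2 o1 o2 h1 h2 /=; case: j hj => [|[|j]] //= hj; lia.
  rewrite Ec Ed; ring.
- move/stepLt2 => ->.
  have Ec : cc (k.*2 + 2) (j + 1) = - cc (k.*2 + 1) j.
    rewrite /cc n1 n2 o1 o2 /=; case: j hj => [|[|j]] //= hj; lia.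
  have Ed : dd (k.*2 + 2) (j + 1) = -1 - dd (k.*2+1) j.
    clear Ec; rewrite /dd n1 n2 o1 o2 h1 h2 /=; case: j hj => [|[|j]] //= hj; lia.
  rewrite Ec Ed; ring.
Qed.

Lemma pathP p v t : is_path v p -> P v t ->
  P (path_end v p) (path_value tau p t).
Proof.
elim: p v t => [|[w l] p IH] v t //= [he hp] hP.
rewrite /path_end /= -/(path_end w p).
exact: (IH w _ hp (edgeP _ _ _ _ he hP)).
Qed.

End S.

Lemma is_path_cat v p q : is_path v p -> is_path (path_end v p) q ->
  is_path v (p ++ q).
Proof.
elim: p v => [|[w l] p IH] v //= [he hp] hq; split => //; exact: IH.
Qed.

Lemma path_end_cat v p q : path_end v (p ++ q) = path_end (path_end v p) q.
Proof. by rewrite /path_end map_cat last_cat. Qed.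

Lemma ext v p w l : is_path v p -> edge (path_end v p) w l ->
  is_path v (p ++ [:: (w, l)]) /\ path_end v (p ++ [:: (w, l)]) = w.
Proof.
move=> hp he; split; first by apply: is_path_cat => //=.
by rewrite path_end_cat.
Qed.

Lemma exists_path2 i : forall j, (2 <= i)%N -> (1 <= j <= i./2 + 1)%N ->
  exists p, is_path (1, 1)%N p /\ path_end (1, 1)%N p = (i, j).
Proof.
elim: i => [|i IH] j hi hj; first by [].
case: i IH hi hj => [|[|i]] IH hi hj //.
  case: j hj => [|[|[|j]]] hj //.
    exists [:: ((2, 1), Ltau)]%N; split => //=; split => //; left; done.
  exists [:: ((2, 2), Ltau2)]%N; split => //=; split => //; right; left; done.
set m := i.+2.
have Em : m = (odd m + (m./2).*2)%N by rewrite odd_double_half.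
have hk : (1 <= m./2)%N by rewrite /m /=.
move: IH hj; rewrite /m -/m; move: hk Em.
set k := m./2.
case: (odd m) => /= hk Em IH hj.
-
  have h1 : (m.+1)./2 = k.+1 by rewrite Em add1n -doubleS doubleK.
  have {}hj : (1 <= j <= k.+1 + 1)%N by rewrite -h1; exact: hj.
  have Em1 : m.+1 = (k.*2 + 2)%N by rewrite Em; lia.
  have hm : (m./2 = k)%N by [].
  case: j hj => [|[|j]] hj //.
    have [p [hp he]] := IH 1%N (ltac:(rewrite /m; done)) (ltac:(lia)).
    exists (p ++ [:: ((m.+1, 1%N), Ltau)]); apply: ext => //; rewrite he.
    right; right; exists k, 1%N; split => //; split; first lia.
    by right; left; (split; [|split]) => //; congr pair; lia.
  have [p [hp he]] := IH j.+1 (ltac:(rewrite /m; done)) (ltac:(lia)).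
  exists (p ++ [:: ((m.+1, j.+2), Ltau2)]); apply: ext => //; rewrite he.
  right; right; exists k, j.+1; split => //; split; first lia.
  by right; right; (split; [|split]) => //; congr pair; lia.
-
  rewrite add0n in Em.
  have h1 : (m.+1)./2 = k by rewrite Em /= uphalf_double.
  have {}hj : (1 <= j <= k + 1)%N by rewrite -h1; exact: hj.
  have hm : (m./2 = k)%N by [].
  have [p [hp he]] := IH j (ltac:(rewrite /m; done)) (ltac:(lia)).
  exists (p ++ [:: ((m.+1, j), L1)]); apply: ext => //; rewrite he.
  right; right; exists k, j; split => //; split; first lia.
  by left; (split; [|split]) => //; congr pair; lia.
Qed.

Theorem mainTheorem3 (tau : algC) (htau : tau ^+ 2 + tau + 1 = 0)
    (him : 0 < 'Im tau) (i j : nat) (hv : vertex i j) :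
  (exists p, is_path (1, 1)%N p /\ path_end (1, 1)%N p = (i, j))
  /\ (forall p, is_path (1, 1)%N p -> path_end (1, 1)%N p = (i, j) ->
        (path_value tau p (-2) - 1) / (-2 - tau)
        = (cc i j)%:~R + (dd i j)%:~R * tau).
Proof.
split.
  case: hv => [[-> ->]|[hi hj]]; first by exists [::].
  exact: exists_path2.
move=> p hp he.
have := pathP tau htau _ _ _ hp (_ : P tau (1, 1)%N (-2)).
rewrite he; apply.
rewrite /P /cc /dd /=.
apply: (mulIf (Dn0 tau htau)); rewrite divfK ?(Dn0 tau htau) //.
transitivity ((1 - tau) * (-2 - tau) - (tau^+2+tau+1)); first ring.
rewrite htau subr0; ring.
Qed.
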